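(* For each $n\in\{3,4,5,6,7\}$, the N00N state $Q=\frac{1}{\sqrt2}\cdot\frac{1}{\sqrt{n!}}\big((a^\dagger_1)^n+(a^\dagger_2)^n\big)$ (i.e. $(|n,0\rangle+|0,n\rangle)/\sqrt2$) cannot be generated by vacuum heralding from the $(n-1)$-mode input $|2,1,\dots,1\rangle$: there is no complex $(n-1)\times(n-1)$ matrix $A$ and no $\gamma\in\mathbb{C}$ such that $\gamma G=Q$, where $G$ is obtained with input occupation numbers $(n_1,\dots,n_{n-1})=(2,1,\dots,1)$ and heralding pattern $(0,\dots,0)$ on the last $n-3$ modes.
   Context: Heralded linear-optical state generation model. States with a fixed photon number are homogeneous polynomials in commuting variables $a^\dagger_1,\dots,a^\dagger_N$ applied to the vacuum. Given $N$ modes, an arbitrary complex $N\times N$ matrix $A$ (not required to be unitary), and a Fock input $\prod_{i=1}^N\frac{1}{\sqrt{n_i!}}(a^\dagger_{i,\mathrm{in}})^{n_i}|0\rangle$, the output is $F|0\rangle$ with $F=\prod_{i=1}^N\frac{1}{\sqrt{n_i!}}\big(\sum_{j=1}^N A_{i,j}a^\dagger_j\big)^{n_i}$. Heralding the last $M$ modes on the pattern $(m_1,\dots,m_M)$, $m=\sum_jm_j$, gives $G=\frac{1}{\prod_jm_j!}\,\frac{\partial^{m}F}{\partial(a^\dagger_{N-M+1})^{m_1}\cdots\partial(a^\dagger_N)^{m_M}}\Big|_{a^\dagger_{N-M+1}=\cdots=a^\dagger_N=0}$; for the all-zero (vacuum) pattern this is just $F$ with $a^\dagger_{N-M+1},\dots,a^\dagger_N$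 set to $0$. $G$ and $Q$ are compared as polynomials in $a^\dagger_1,\dots,a^\dagger_{N-M}$. *)

(* Defs.v *)
From HB Require Import structures.
From mathcomp Require Import all_boot all_order all_algebra.
From mathcomp Require Import complex.
From mathcomp Require Import Rstruct.
From mathcomp Require Import mpoly.
From Stdlib Require Rdefinitions.

Set Implicit Arguments.
Unset Strict Implicit.
Unset Printing Implicit Defensive.

Import Order.TTheory GRing.Theory Num.Theory.
Local Open Scope ring_scope.

Notation C := (complex Rdefinitions.R).

(* Output creation operator of input mode i: sum_j A_{i,j} a^dagger_j,
   with a^dagger_j represented by the variable 'X_j. *)
Definition out_op (N : nat) (A : 'M[C]_N) (i : 'I_N) : {mpoly C[N]} :=
  \sum_(j < N) A i j *: 'X_j.

Definition Fpoly (N : nat) (A : 'M[C]_N) (occ : 'I_N -> nat) : {mpoly C[N]} :=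
  \prod_(i < N) (((sqrtC ((occ i)`!)%:R)^-1) *: (out_op A i) ^+ occ i).

(* Vacuum heralding of all modes with index >= K (the last N - K modes):
   substitute 0 for a^dagger_j, j >= K, and keep a^dagger_j, j < K. *)
Definition vac_herald (N K : nat) (F : {mpoly C[N]}) : {mpoly C[K]} :=
  F \mPo [tuple (oapp (fun j : 'I_K => 'X_j) 0 (insub (val i) : option 'I_K)) | i < N].

Definition occ_2111 (N : nat) (i : 'I_N) : nat := if val i == 0%N then 2%N else 1%N.

Definition noon (n : nat) : {mpoly C[2]} :=
  ((sqrtC 2)^-1 * (sqrtC (n`!)%:R)^-1) *: ('X_0 ^+ n + 'X_1 ^+ n).

(* Main.v *)
Require Import Defs.
From HB Require Import structures.
From mathcomp Require Import all_boot all_order all_algebra.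
From mathcomp Require Import complex Rstruct.
From mathcomp Require Import mpoly.
From mathcomp Require Import ring.
Import GRing.Theory.
Local Open Scope ring_scope.

Definition psi (v : 'I_2 -> {poly C}) (p : {mpoly C[2]}) : {poly C} :=
  mmap (@polyC C) v p.

Lemma psiX v i : psi v 'X_i = v i.
Proof. by rewrite /psi mmapX mmap1U. Qed.
Lemma psiZ v c p : psi v (c *: p) = c%:P * psi v p.
Proof. by rewrite /psi mmapZ. Qed.
Lemma psiM v p q : psi v (p * q) = psi v p * psi v q.
Proof. by rewrite /psi rmorphM. Qed.
Lemma psiXn v p k : psi v (p ^+ k) = psi v p ^+ k.
Proof. by rewrite /psi rmorphXn. Qed.
Lemma psiD v p q : psi v (p + q) = psi v p + psi v q.
Proof. by rewrite /psi rmorphD. Qed.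
Lemma psi0 v : psi v 0 = 0.
Proof. by rewrite /psi rmorph0. Qed.

Lemma psi_herald_X (N : nat) v (j : 'I_N) :
  psi v (vac_herald 2 'X_j) = oapp v 0 (insub (val j) : option 'I_2).
Proof.
rewrite /vac_herald comp_mpolyXU -tnth_nth tnth_mktuple.
case: (insub (val j)) => [k|] /=; first by rewrite psiX.
exact: psi0.
Qed.

Lemma psi_herald_out (N : nat) v (A : 'M[C]_N.+2) i :
  psi v (vac_herald 2 (out_op A i)) = (A i 0)%:P * v 0 + (A i 1)%:P * v 1.
Proof.
rewrite /out_op /vac_herald raddf_sum /= /psi raddf_sum /=.
under eq_bigr => j _ do rewrite comp_mpolyZ mmapZ -/(vac_herald 2 _) -/(psi v _) psi_herald_X.
rewrite big_ord_recl big_ord_recl.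
rewrite big1 ?addr0; last first.
  by move=> j _; rewrite insubF ?mulr0.
have h0 : insub (val (ord0 : 'I_N.+2)) = Some (0 : 'I_2).
  by case: insubP => [u _ /= hu|//]; congr Some; apply: val_inj.
have h1 : insub (val (lift ord0 (ord0 : 'I_N.+1))) = Some (1 : 'I_2).
  by case: insubP => [u _ /= hu|//]; congr Some; apply: val_inj.
rewrite h0 h1 /=; congr (_%:P * _ + (A i _)%:P * _); exact: val_inj.
Qed.

Lemma vhM N K (p q : {mpoly C[N]}) : vac_herald K (p * q) = vac_herald K p * vac_herald K q.
Proof. by rewrite /vac_herald rmorphM. Qed.
Lemma vhZ N K c (p : {mpoly C[N]}) : vac_herald K (c *: p) = c *: vac_herald K p.
Proof. by rewrite /vac_herald comp_mpolyZ. Qed.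
Lemma vhXn N K k (p : {mpoly C[N]}) : vac_herald K (p ^+ k) = vac_herald K p ^+ k.
Proof. by rewrite /vac_herald rmorphXn. Qed.

Lemma ring_aux (x L r : {poly C}) c : x = L -> c%:P * x ^+ 2 * r = L ^+ 2 * (c%:P * r).
Proof. by move->; rewrite -mulrA mulrCA. Qed.
Opaque psi vac_herald out_op.
Lemma psi_aux (N : nat) v (A : 'M[C]_N.+2) c (rest : {mpoly C[N.+2]}) :
  psi v (vac_herald 2 (c *: out_op A ord0 ^+ 2 * rest)) =
  ((A ord0 0)%:P * v 0 + (A ord0 1)%:P * v 1) ^+ 2 * (c%:P * psi v (vac_herald 2 rest)).
Proof.
rewrite vhM vhZ vhXn psiM psiZ psiXn.
apply: ring_aux.
exact: psi_herald_out.
Qed.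

Lemma psi_F (N : nat) v (A : 'M[C]_N.+2) : exists R,
  psi v (vac_herald 2 (Fpoly A (@occ_2111 N.+2))) =
  ((A ord0 0)%:P * v 0 + (A ord0 1)%:P * v 1) ^+ 2 * R.
Proof.
rewrite /Fpoly big_ord_recl.
(eexists; exact: psi_aux).
Qed.

Lemma psi_noon v n : psi v (noon n) =
  ((Num.Theory.sqrtC 2)^-1 * (Num.Theory.sqrtC (n`!)%:R)^-1)%:P * (v 0 ^+ n + v 1 ^+ n).
Proof. by rewrite /noon psiZ psiD !psiXn !psiX. Qed.

Lemma noon_c_neq0 n : ((Num.Theory.sqrtC 2)^-1 * (Num.Theory.sqrtC (n`!)%:R)^-1 : C) != 0.
Proof.
rewrite mulf_neq0 // invr_eq0 Num.Theory.sqrtC_eq0.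
  by rewrite (Num.Theory.pnatr_eq0 C 2).
by rewrite Num.Theory.pnatr_eq0 -lt0n fact_gt0.
Qed.

Lemma ring_aux2 (R : comRingType) (g d X r : R) :
  g * ((d * X) ^+ 2 * r) = X * (X * (g * d ^+ 2 * r)).
Proof. ring. Qed.

Lemma key (N n : nat) (A : 'M[C]_N.+2) (g : C) (v : 'I_2 -> {poly C}) (d : C) :
  g *: vac_herald 2 (Fpoly A (@occ_2111 N.+2)) = noon n ->
  (A ord0 0)%:P * v 0 + (A ord0 1)%:P * v 1 = d%:P * 'X ->
  (v 0 ^+ n + v 1 ^+ n)`_0 = 0 /\ (v 0 ^+ n + v 1 ^+ n)`_1 = 0.
Proof.
move=> H HL.
have := congr1 (psi v) H.
rewrite psiZ psi_noon.
have [R ->] := psi_F _ v A.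
rewrite HL.
have -> : g%:P * ((d%:P * 'X) ^+ 2 * R) = 'X * ('X * (g%:P * d%:P ^+ 2 * R)).
  exact: ring_aux2.
move=> E; split.
  have := congr1 (fun p : {poly C} => p`_0) E.
  rewrite /= coefXM coefCM /= => /esym/eqP; rewrite mulf_eq0 (negbTE (noon_c_neq0 n)) /=.
  by move/eqP.
have := congr1 (fun p : {poly C} => p`_1) E.
rewrite /= coefXM coefXM coefCM /= => /esym/eqP; rewrite mulf_eq0 (negbTE (noon_c_neq0 n)) /=.
by move/eqP.
Qed.

Lemma coefs_bX (b : C) n :
  ((b%:P + 'X) ^+ n)`_0 = b ^+ n /\ ((b%:P + 'X) ^+ n)`_1 = b ^+ n.-1 *+ n.
Proof.
elim: n => [|n [IH0 IH1]]; first by rewrite expr0 !coef1.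
rewrite exprSr mulrDr !coefD !coefMC !coefMX /= IH0 IH1 addr0 exprSr; split=> //.
case: n {IH0 IH1} => [|n]; first by rewrite /= mulr0n mul0r add0r expr0 mulr1n.
by rewrite /= mulrnAl -exprSr [in RHS]mulrS addrC.
Qed.

Arguments key {N n A g v d}.

Definition mkv (p0 p1 : {poly C}) : 'I_2 -> {poly C} :=
  fun i => if val i == 0%N then p0 else p1.
Lemma mkv0 p0 p1 : mkv p0 p1 0 = p0. Proof. by []. Qed.
Lemma mkv1 p0 p1 : mkv p0 p1 1 = p1. Proof. by []. Qed.

Theorem mainTheorem4 (n : nat) :
  (3 <= n <= 7)%N ->
  ~ exists (A : 'M[C]_(n.-1)) (gamma : C),
      gamma *: vac_herald 2 (Fpoly A (@occ_2111 n.-1)) = noon n.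
Proof.
case: n => [|[|[|M]]] // _ [A [g H]].
have hb : A ord0 1 = 0.
  pose v := mkv ((A ord0 1)%:P + 'X) (- (A ord0 0)%:P).
  have HL : (A ord0 0)%:P * v 0 + (A ord0 1)%:P * v 1 = (A ord0 0)%:P * 'X.
    rewrite /v mkv0 mkv1; ring.
  have [_ h1] := key H HL.
  move: h1; rewrite /v mkv0 mkv1 coefD (proj2 (coefs_bX _ _)) -rmorphN -rmorphXn coefC /= addr0.
  move/eqP; rewrite Num.Theory.mulrn_eq0 /= expf_eq0 /=.
  by move/eqP.
have ha : A ord0 0 = 0.
  pose v := mkv (- (A ord0 1)%:P) ((A ord0 0)%:P + 'X).
  have HL : (A ord0 0)%:P * v 0 + (A ord0 1)%:P * v 1 = (A ord0 1)%:P * 'X.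
    rewrite /v mkv0 mkv1; ring.
  have [_ h1] := key H HL.
  move: h1; rewrite /v mkv0 mkv1 coefD (proj2 (coefs_bX _ _)) -rmorphN -rmorphXn coefC /= add0r.
  move/eqP; rewrite Num.Theory.mulrn_eq0 /= expf_eq0 /=.
  by move/eqP.
pose v := mkv 1 0.
have HL : (A ord0 0)%:P * v 0 + (A ord0 1)%:P * v 1 = 0%:P * 'X.
  by rewrite /v mkv0 mkv1 ha hb !mul0r add0r.
have [h0 _] := key H HL.
move: h0; rewrite /v mkv0 mkv1 expr1n expr0n /= addr0 coef1 /=.
by move/eqP; rewrite oner_eq0.
Qed.
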